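(* Let $\{X_i\}_{i\in\mathbb{N}}$ be compact metric spaces with closed non-empty subsets $A_i\subseteq X_i$, and let $X$ be a compact metric space with a closed non-empty subset $A\subseteq X$. Then the following are equivalent: (1) $(X_i,A_i)\to(X,A)$ in the Gromov--Hausdorff sense of metric pairs; (2) there exist positive numbers $\epsilon_i\to0$ and $\epsilon_i$-Gromov--Hausdorff approximations $f_i\colon X_i\to X$ and $g_i\colon A_i\to A$ such that $d_X(f_i(x),g_i(x))\le\epsilon_i$ for all $x\in A_i$.
   Context: A map $f\colon X\to Y$ between metric spaces is an $\epsilon$-Gromov--Hausdorff approximation if $|d_Y(f(x),f(x'))-d_X(x,x')|\le\epsilon$ for all $x,x'\in X$ and every point of $Y$ lies within distance $\epsilon$ of $f(X)$. For compact metric spaces $X,Y$ with closed non-empty subsets $A\subseteq X$, $B\subseteq Y$, $d_{GH}((X,A),(Y,B))=\inf\max\{d_H^Z(\varphi(X),\psi(Y)),d_H^Z(\varphi(A),\psi(B))\}$, the infimum over metric spaces $Z$ and isometric embeddings $\varphi\colon X\to Z$, $\psi\colon Y\to Z$, with $d_H^Z$ the Hausdorff distance; $(X_i,A_i)\to(X,A)$ means $d_{GH}((X_i,A_i),(X,A))\to0$ (equivalently, there are $\epsilon_i\to0$ and $\epsilon_i$-Gromov--Hausdorff approximations $f_i\colon X_i\to X$ with $d_H(f_i(A_i),A)<\epsilon_i$). *)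

(* Defs.v *)
From Stdlib Require Import Reals List.
Open Scope R_scope.

Record MetricSpace := {
  carrier :> Type;
  mdist : carrier -> carrier -> R;
  mdist_eq0 : forall x y, mdist x y = 0 <-> x = y;
  mdist_sym : forall x y, mdist x y = mdist y x;
  mdist_tri : forall x y z, mdist x z <= mdist x y + mdist y z
}.

Arguments mdist {m} x y.

Definition is_open (X : MetricSpace) (U : X -> Prop) : Prop :=
  forall x, U x -> exists r, 0 < r /\ forall y, mdist x y < r -> U y.

Definition is_closed (X : MetricSpace) (A : X -> Prop) : Prop :=
  is_open X (fun x => ~ A x).

Definition is_compact (X : MetricSpace) : Prop :=
  forall (I : Type) (U : I -> X -> Prop),
    (forall i, is_open X (U i)) ->
    (forall x, exists i, U i x) ->
    exists l : list I, forall x, exists i, In i l /\ U i x.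

(** eps-Gromov--Hausdorff approximation f : S -> T, for types S, T carrying
    distance functions dS, dT (used both for spaces and for subspaces). *)
Definition GH_approx {S T : Type} (dS : S -> S -> R) (dT : T -> T -> R)
  (f : S -> T) (eps : R) : Prop :=
  (forall x x', Rabs (dT (f x) (f x') - dS x x') <= eps) /\
  (forall y, exists x, dT y (f x) <= eps).

Definition subdist (X : MetricSpace) (A : X -> Prop)
  (a b : {x : X | A x}) : R := mdist (proj1_sig a) (proj1_sig b).

Definition isometric_embedding (X Z : MetricSpace) (phi : X -> Z) : Prop :=
  forall x y, mdist (phi x) (phi y) = mdist x y.

Definition hausdorff_le (Z : MetricSpace) (S1 S2 : Z -> Prop) (r : R) : Prop :=
  (forall x, S1 x -> forall eta, 0 < eta -> exists y, S2 y /\ mdist x y <= r + eta) /\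
  (forall y, S2 y -> forall eta, 0 < eta -> exists x, S1 x /\ mdist y x <= r + eta).

Definition image {X Z : Type} (phi : X -> Z) (A : X -> Prop) : Z -> Prop :=
  fun z => exists x, A x /\ phi x = z.

Definition GH_pair_dist_lt (X : MetricSpace) (A : X -> Prop)
  (Y : MetricSpace) (B : Y -> Prop) (eps : R) : Prop :=
  exists (Z : MetricSpace) (phi : X -> Z) (psi : Y -> Z) (r : R),
    isometric_embedding X Z phi /\ isometric_embedding Y Z psi /\ r < eps /\
    hausdorff_le Z (image phi (fun _ => True)) (image psi (fun _ => True)) r /\
    hausdorff_le Z (image phi A) (image psi B) r.

Definition GH_pair_converges (Xs : nat -> MetricSpace) (As : forall i, Xs i -> Prop)
  (X : MetricSpace) (A : X -> Prop) : Prop :=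
  forall eps, 0 < eps -> exists N, forall i, (N <= i)%nat ->
    GH_pair_dist_lt (Xs i) (As i) X A eps.

(* Main.v *)
Require Import Defs.
From Stdlib Require Import Reals Lra Lia Classical ClassicalEpsilon List.
Open Scope R_scope.

Lemma dist_nonneg (X : MetricSpace) (x y : X) : 0 <= mdist x y.
Proof.
  pose proof (mdist_tri X x y x) as H.
  rewrite (proj2 (mdist_eq0 X x x) eq_refl) in H.
  rewrite (mdist_sym X y x) in H. lra.
Qed.

Lemma md_refl (X : MetricSpace) (x : X) : mdist x x = 0.
Proof. apply (proj2 (mdist_eq0 X x x)); reflexivity. Qed.

Lemma glb_ex (S : Type) (F : S -> R) (s : S) (H : forall a, 0 <= F a) :
  {m : R | (forall a, m <= F a) /\ (forall L, (forall a, L <= F a) -> L <= m)}.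
Proof.
  destruct (completeness (fun r => exists a, r = - F a)) as [m [Hub Hl]].
  - exists 0. intros r [a ->]. specialize (H a). lra.
  - exists (- F s). eauto.
  - exists (-m). split.
    + intros a. assert (- F a <= m) by (apply Hub; eauto). lra.
    + intros L HL. assert (m <= -L). { apply Hl. intros r [a ->]. specialize (HL a); lra. } lra.
Defined.

Section Glue.
Variables (X Y : MetricSpace) (f : X -> Y) (c : R).

Definition hinf (x : X) (y : Y) : R :=
  proj1_sig (glb_ex _ (fun a => mdist x a + mdist (f a) y) x
    (fun a => Rplus_le_le_0_compat _ _ (dist_nonneg _ _ _) (dist_nonneg _ _ _))).

Lemma hinf_le x y a : hinf x y <= mdist x a + mdist (f a) y.
Proof. unfold hinf. destruct glb_ex as [m [H1 H2]]. apply H1. Qed.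

Lemma hinf_ge x y L : (forall a, L <= mdist x a + mdist (f a) y) -> L <= hinf x y.
Proof. unfold hinf. destruct glb_ex as [m [H1 H2]]. apply H2. Qed.

Lemma hinf_nonneg x y : 0 <= hinf x y.
Proof. apply hinf_ge. intros a. pose proof (dist_nonneg _ x a). pose proof (dist_nonneg _ (f a) y). lra. Qed.

Lemma hinf_l x x' y : hinf x y <= mdist x x' + hinf x' y.
Proof.
  assert (hinf x y - mdist x x' <= hinf x' y); [|lra].
  apply hinf_ge. intros a. pose proof (hinf_le x y a). pose proof (mdist_tri X x x' a). lra.
Qed.

Lemma hinf_r x y y' : hinf x y <= hinf x y' + mdist y' y.
Proof.
  assert (hinf x y - mdist y' y <= hinf x y'); [|lra].
  apply hinf_ge. intros a. pose proof (hinf_le x y a). pose proof (mdist_tri Y (f a) y' y). lra.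
Qed.

Definition gdist (p q : X + Y) : R :=
  match p, q with
  | inl x, inl x' => mdist x x'
  | inr y, inr y' => mdist y y'
  | inl x, inr y => hinf x y + c
  | inr y, inl x => hinf x y + c
  end.

Hypothesis Hc : 0 < c.
Hypothesis Hf1 : forall a b, mdist a b <= mdist (f a) (f b) + 2 * c.
Hypothesis Hf2 : forall a b, mdist (f a) (f b) <= mdist a b + 2 * c.

Lemma gdist_eq0 p q : gdist p q = 0 <-> p = q.
Proof.
  destruct p as [x|y], q as [x'|y']; simpl.
  - rewrite mdist_eq0. split; [intros ->; auto| intros H; injection H; auto].
  - pose proof (hinf_nonneg x y'). split; intros H'; [lra| discriminate].
  - pose proof (hinf_nonneg x' y). split; intros H'; [lra| discriminate].
  - rewrite mdist_eq0. split; [intros ->; auto| intros H; injection H; auto].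
Qed.

Lemma gdist_sym p q : gdist p q = gdist q p.
Proof. destruct p, q; simpl; auto using mdist_sym. Qed.

Lemma gdist_tri p q r : gdist p r <= gdist p q + gdist q r.
Proof.
  destruct p as [x|y], q as [x1|y1], r as [x2|y2]; simpl.
  - apply mdist_tri.
  - pose proof (hinf_l x x1 y2). lra.
  -
    assert (mdist x x2 - 2 * c - hinf x y1 <= hinf x2 y1); [|lra].
    apply hinf_ge. intros b.
    assert (mdist x x2 - 2 * c - (mdist x2 b + mdist (f b) y1) <= hinf x y1); [|lra].
    apply hinf_ge. intros a.
    pose proof (Hf1 a b). pose proof (mdist_tri X x a x2). pose proof (mdist_tri X a b x2).
    pose proof (mdist_tri Y (f a) y1 (f b)). rewrite (mdist_sym Y y1 (f b)) in H2.
    rewrite (mdist_sym X b x2) in H1. lra.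
  - pose proof (hinf_r x y2 y1). lra.
  - pose proof (hinf_l x2 x1 y). rewrite (mdist_sym X x2 x1) in H. lra.
  - assert (mdist y y2 - 2 * c - hinf x1 y <= hinf x1 y2); [|lra].
    apply hinf_ge. intros b.
    assert (mdist y y2 - 2 * c - (mdist x1 b + mdist (f b) y2) <= hinf x1 y); [|lra].
    apply hinf_ge. intros a.
    pose proof (Hf2 a b). pose proof (mdist_tri Y y (f a) y2). pose proof (mdist_tri Y (f a) (f b) y2).
    pose proof (mdist_tri X a x1 b). rewrite (mdist_sym X a x1) in H2.
    rewrite (mdist_sym Y y (f a)) in H0. lra.
  - pose proof (hinf_r x2 y y1). rewrite (mdist_sym Y y1 y) in H. lra.
  - apply mdist_tri.
Qed.

Definition glue : MetricSpace :=
  {| carrier := X + Y; mdist := gdist; mdist_eq0 := gdist_eq0;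
     mdist_sym := gdist_sym; mdist_tri := gdist_tri |}.

End Glue.

Lemma Rabs_le_between (a b : R) : Rabs a <= b -> - b <= a <= b.
Proof. intros H. pose proof (Rle_abs a). pose proof (Rle_abs (-a)). rewrite Rabs_Ropp in H1. lra. Qed.

Lemma rev_dir (Y X : MetricSpace) (B : Y -> Prop) (A : X -> Prop) (e : R)
  (f : Y -> X) (g : {y | B y} -> {x | A x}) :
  0 < e ->
  GH_approx (@mdist Y) (@mdist X) f e ->
  GH_approx (subdist Y B) (subdist X A) g e ->
  (forall y, mdist (f (proj1_sig y)) (proj1_sig (g y)) <= e) ->
  GH_pair_dist_lt Y B X A (3 * e).
Proof.
  intros He [Hfd Hfs] [Hgd Hgs] Hc.
  assert (Hf1 : forall a b, mdist a b <= mdist (f a) (f b) + 2 * (e/2)).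
  { intros a b. specialize (Hfd a b). apply Rabs_le_between in Hfd. lra. }
  assert (Hf2 : forall a b, mdist (f a) (f b) <= mdist a b + 2 * (e/2)).
  { intros a b. specialize (Hfd a b). apply Rabs_le_between in Hfd. lra. }
  exists (glue Y X f (e/2) ltac:(lra) Hf1 Hf2), inl, inr, (5/2 * e).
  split; [intros x y; reflexivity|].
  split; [intros x y; reflexivity|].
  split; [lra|].
  split; split.
  - intros z [x [_ <-]] eta Heta. exists (inr (f x)). split; [exists (f x); auto|].
    simpl. pose proof (hinf_le Y X f x (f x) x). rewrite !md_refl in H. lra.
  - intros z [y [_ <-]] eta Heta. destruct (Hfs y) as [x Hx].
    exists (inl x). split; [exists x; auto|].
    simpl. pose proof (hinf_le Y X f x y x). rewrite md_refl in H.
    rewrite mdist_sym in Hx. lra.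
  - intros z [x [Hx <-]] eta Heta. exists (inr (proj1_sig (g (exist _ x Hx)))).
    split; [exists (proj1_sig (g (exist _ x Hx))); split; [apply proj2_sig|auto]|].
    simpl. pose proof (hinf_le Y X f x (proj1_sig (g (exist _ x Hx))) x).
    rewrite md_refl in H. pose proof (Hc (exist _ x Hx)). simpl in H0. lra.
  - intros z [y [Hy <-]] eta Heta. destruct (Hgs (exist _ y Hy)) as [a Ha].
    unfold subdist in Ha; simpl in Ha.
    exists (inl (proj1_sig a)). split; [exists (proj1_sig a); split; [apply proj2_sig|auto]|].
    simpl. pose proof (hinf_le Y X f (proj1_sig a) y (proj1_sig a)). rewrite md_refl in H.
    pose proof (Hc a). pose proof (mdist_tri X (f (proj1_sig a)) (proj1_sig (g a)) y).
    rewrite (mdist_sym X (proj1_sig (g a)) y) in H1. lra.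
Qed.

Definition Papprox (Y : MetricSpace) (B : Y -> Prop) (X : MetricSpace) (A : X -> Prop) (e : R) :=
  exists (f : Y -> X) (g : {y | B y} -> {x | A x}),
    GH_approx (@mdist Y) (@mdist X) f e /\
    GH_approx (subdist Y B) (subdist X A) g e /\
    (forall y, mdist (f (proj1_sig y)) (proj1_sig (g y)) <= e).

Lemma fwd_dir (Y X : MetricSpace) (B : Y -> Prop) (A : X -> Prop) (e : R) :
  GH_pair_dist_lt Y B X A e -> Papprox Y B X A (2 * e).
Proof.
  intros [Z [phi [psi [r [Hphi [Hpsi [Hr [[H1 H2] [H3 H4]]]]]]]]].
  set (d := (r + e) / 2).
  assert (Hd : d <= e) by (unfold d; lra).
  assert (Hf : forall y, exists x : X, mdist (phi y) (psi x) <= d).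
  { intros y. destruct (H1 (phi y) (ex_intro _ y (conj I eq_refl)) ((e - r)/2) ltac:(lra))
      as [z [[x [_ <-]] Hz]]. exists x. unfold d; lra. }
  assert (Hg : forall b : {y | B y}, exists a : {x | A x}, mdist (phi (proj1_sig b)) (psi (proj1_sig a)) <= d).
  { intros [y Hy]. destruct (H3 (phi y) (ex_intro _ y (conj Hy eq_refl)) ((e - r)/2) ltac:(lra))
      as [z [[x [Hx <-]] Hz]]. exists (exist _ x Hx). simpl. unfold d; lra. }
  set (f := fun y => proj1_sig (constructive_indefinite_description _ (Hf y))).
  assert (Hfp : forall y, mdist (phi y) (psi (f y)) <= d).
  { intros y. unfold f. destruct constructive_indefinite_description; simpl; auto. }
  set (g := fun b => proj1_sig (constructive_indefinite_description _ (Hg b))).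
  assert (Hgp : forall b, mdist (phi (proj1_sig b)) (psi (proj1_sig (g b))) <= d).
  { intros b. unfold g. destruct constructive_indefinite_description; simpl; auto. }
  exists f, g. split; [split|split; [split|]].
  - intros y y'. apply Rabs_le. rewrite <- Hphi, <- Hpsi.
    pose proof (Hfp y). pose proof (Hfp y').
    pose proof (mdist_tri Z (phi y) (psi (f y)) (phi y')).
    pose proof (mdist_tri Z (psi (f y)) (psi (f y')) (phi y')).
    pose proof (mdist_tri Z (psi (f y)) (phi y) (psi (f y'))).
    pose proof (mdist_tri Z (phi y) (phi y') (psi (f y'))).
    rewrite (mdist_sym Z (psi (f y')) (phi y')) in *.
    rewrite (mdist_sym Z (psi (f y)) (phi y)) in *. lra.
  - intros x. destruct (H2 (psi x) (ex_intro _ x (conj I eq_refl)) ((e - r)/2) ltac:(lra))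
      as [z [[y [_ <-]] Hz]]. exists y. rewrite <- Hpsi.
    pose proof (Hfp y). pose proof (mdist_tri Z (psi x) (phi y) (psi (f y))). unfold d in *; lra.
  - intros b b'. apply Rabs_le. unfold subdist. rewrite <- Hphi, <- Hpsi.
    pose proof (Hgp b). pose proof (Hgp b').
    set (y := proj1_sig b) in *. set (y' := proj1_sig b') in *.
    set (u := proj1_sig (g b)) in *. set (u' := proj1_sig (g b')) in *.
    pose proof (mdist_tri Z (phi y) (psi u) (phi y')).
    pose proof (mdist_tri Z (psi u) (psi u') (phi y')).
    pose proof (mdist_tri Z (psi u) (phi y) (psi u')).
    pose proof (mdist_tri Z (phi y) (phi y') (psi u')).
    rewrite (mdist_sym Z (psi u') (phi y')) in *.
    rewrite (mdist_sym Z (psi u) (phi y)) in *. lra.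
  - intros [x Hx]. destruct (H4 (psi x) (ex_intro _ x (conj Hx eq_refl)) ((e - r)/2) ltac:(lra))
      as [z [[y [Hy <-]] Hz]]. exists (exist _ y Hy). unfold subdist. rewrite <- Hpsi.
    pose proof (Hgp (exist _ y Hy)). simpl in *.
    pose proof (mdist_tri Z (psi x) (phi y) (psi (proj1_sig (g (exist _ y Hy))))). eapply Rle_trans; [exact H0|]. unfold d in *; lra.
  - intros b. rewrite <- Hpsi. pose proof (Hgp b). pose proof (Hfp (proj1_sig b)).
    pose proof (mdist_tri Z (psi (f (proj1_sig b))) (phi (proj1_sig b)) (psi (proj1_sig (g b)))).
    rewrite (mdist_sym Z (psi (f (proj1_sig b))) (phi (proj1_sig b))) in *. lra.
Qed.

Lemma list_bound (X : MetricSpace) (x0 : X) (l : list X) :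
  exists M, forall c, In c l -> mdist x0 c + 1 <= M.
Proof.
  induction l as [|a l [M HM]].
  - exists 0. intros c [].
  - exists (Rmax (mdist x0 a + 1) M). intros c [<-|Hc].
    + apply Rmax_l.
    + eapply Rle_trans; [apply HM; auto| apply Rmax_r].
Qed.

Lemma compact_bounded (X : MetricSpace) (x0 : X) :
  is_compact X -> exists M, forall x y : X, mdist x y <= M.
Proof.
  intros HK.
  destruct (HK X (fun c y => mdist c y < 1)) as [l Hl].
  - intros c y Hy. exists (1 - mdist c y). split; [lra|].
    intros z Hz. pose proof (mdist_tri X c y z). lra.
  - intros x. exists x. rewrite md_refl. lra.
  - destruct (list_bound X x0 l) as [M HM].
    assert (Hb : forall x, mdist x0 x <= M).
    { intros x. destruct (Hl x) as [c [Hc Hcx]]. pose proof (HM c Hc).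
      pose proof (mdist_tri X x0 c x). lra. }
    exists (2 * M). intros x y. pose proof (Hb x). pose proof (Hb y).
    pose proof (mdist_tri X x x0 y). rewrite (mdist_sym X x x0) in H1. lra.
Qed.

Lemma trivial_approx (Y X : MetricSpace) (B : Y -> Prop) (A : X -> Prop) :
  is_compact Y -> (exists y, B y) -> is_compact X -> (exists x, A x) ->
  exists e, 0 < e /\ Papprox Y B X A e.
Proof.
  intros HY [y0 Hy0] HX [a0 Ha0].
  destruct (compact_bounded Y y0 HY) as [MY HMY].
  destruct (compact_bounded X a0 HX) as [MX HMX].
  pose proof (dist_nonneg Y y0 y0). pose proof (HMY y0 y0).
  pose proof (dist_nonneg X a0 a0). pose proof (HMX a0 a0).
  exists (MY + MX + 1). split; [lra|].
  exists (fun _ => a0), (fun _ => exist _ a0 Ha0).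
  split; [split|split; [split|]].
  - intros x x'. rewrite md_refl. pose proof (HMY x x'). pose proof (dist_nonneg Y x x').
    rewrite Rabs_left1; lra.
  - intros x. exists y0. pose proof (HMX x a0). lra.
  - intros x x'. unfold subdist; simpl. rewrite md_refl.
    pose proof (HMY (proj1_sig x) (proj1_sig x')). pose proof (dist_nonneg Y (proj1_sig x) (proj1_sig x')).
    rewrite Rabs_left1; lra.
  - intros x. exists (exist _ y0 Hy0). unfold subdist; simpl. pose proof (HMX (proj1_sig x) a0). lra.
  - intros x. simpl. rewrite md_refl. lra.
Qed.

Lemma Papprox_mono Y B X A e e' : Papprox Y B X A e -> e <= e' -> Papprox Y B X A e'.
Proof.
  intros [f [g [[H1 H2] [[H3 H4] H5]]]] He. exists f, g.
  split; [split|split; [split|]].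
  - intros x x'. specialize (H1 x x'). lra.
  - intros y. destruct (H2 y) as [x Hx]. exists x. lra.
  - intros x x'. specialize (H3 x x'). lra.
  - intros y. destruct (H4 y) as [x Hx]. exists x. lra.
  - intros y. specialize (H5 y). lra.
Qed.

Lemma inv_S_pos k : 0 < / INR (S k).
Proof. apply Rinv_0_lt_compat. apply lt_0_INR. lia. Qed.

Lemma inv_S_le k m : (k <= m)%nat -> / INR (S m) <= / INR (S k).
Proof. intros H. apply Rinv_le_contravar. apply lt_0_INR; lia. apply le_INR; lia. Qed.

Theorem proposition2p1
  (Xs : nat -> MetricSpace) (As : forall i, Xs i -> Prop)
  (X : MetricSpace) (A : X -> Prop) :
  (forall i, is_compact (Xs i)) ->
  (forall i, is_closed (Xs i) (As i)) ->
  (forall i, exists x, As i x) ->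
  is_compact X -> is_closed X A -> (exists x, A x) ->
  (GH_pair_converges Xs As X A <->
   exists (eps : nat -> R)
          (f : forall i, Xs i -> X)
          (g : forall i, {x : Xs i | As i x} -> {y : X | A y}),
     (forall i, 0 < eps i) /\ Un_cv eps 0 /\
     (forall i, GH_approx (@mdist (Xs i)) (@mdist X) (f i) (eps i)) /\
     (forall i, GH_approx (subdist (Xs i) (As i)) (subdist X A) (g i) (eps i)) /\
     (forall i (x : {x : Xs i | As i x}),
        mdist (f i (proj1_sig x)) (proj1_sig (g i x)) <= eps i)).
Proof.
  intros HXs _ HAs HX _ HA. split.
  - intros Hconv.
    assert (HN : forall k, exists N, forall i, (N <= i)%nat ->
               Papprox (Xs i) (As i) X A (2 * / INR (S k))).
    { intros k. destruct (Hconv (/ INR (S k)) (inv_S_pos k)) as [N HN].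
      exists N. intros i Hi. apply fwd_dir. auto. }
    assert (Hex : forall i m, exists e, 0 < e /\ Papprox (Xs i) (As i) X A e /\
               forall k, (k < m)%nat -> Papprox (Xs i) (As i) X A (2 * / INR (S k)) ->
                 e <= 2 * / INR (S k)).
    { intros i m. induction m as [|m [e [He [HP Hk]]]].
      - destruct (trivial_approx (Xs i) X (As i) A (HXs i) (HAs i) HX HA) as [e [He HP]].
        exists e. split; [auto|split; [auto|]]. intros k Hk. lia.
      - destruct (classic (Papprox (Xs i) (As i) X A (2 * / INR (S m)))) as [Hm|Hm].
        + exists (2 * / INR (S m)). split; [pose proof (inv_S_pos m); lra|split; [auto|]].
          intros k Hk1 _. pose proof (inv_S_le k m ltac:(lia)). lra.
        + exists e. split; [auto|split; [auto|]].
          intros k Hk1 Hk2. destruct (Nat.eq_dec k m) as [->|Hne]; [contradiction|].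
          apply Hk; auto. lia. }
    set (E := fun i => constructive_indefinite_description _ (Hex i (S i))).
    set (eps := fun i => proj1_sig (E i)).
    assert (Heps : forall i, 0 < eps i /\ Papprox (Xs i) (As i) X A (eps i) /\
               forall k, (k < S i)%nat -> Papprox (Xs i) (As i) X A (2 * / INR (S k)) ->
                 eps i <= 2 * / INR (S k)).
    { intros i. unfold eps. exact (proj2_sig (E i)). }
    set (F := fun i => constructive_indefinite_description _ (proj1 (proj2 (Heps i)))).
    set (f := fun i => proj1_sig (F i)).
    set (G := fun i => constructive_indefinite_description _ (proj2_sig (F i))).
    set (g := fun i => proj1_sig (G i)).
    exists eps, f, g.
    split; [intros i; apply Heps|].
    split.
    + intros eta Heta. destruct (archimed_cor1 (eta / 2) ltac:(lra)) as [N [HNe HN0]].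
      destruct N as [|k]; [lia|].
      destruct (HN k) as [M HM]. exists (Nat.max M k). intros n Hn.
      unfold R_dist. rewrite Rminus_0_r. destruct (Heps n) as [H1 [_ H3]].
      rewrite Rabs_pos_eq by lra.
      assert (eps n <= 2 * / INR (S k)) by (apply H3; [lia| apply HM; lia]). lra.
    + split; [|split]; intros i; pose proof (proj2_sig (G i)) as HG; simpl in HG;
        fold (g i) in HG; fold (f i) in HG; tauto.
  - intros [eps [f [g [Hpos [Hcv [Hf [Hg Hc]]]]]]] e He.
    destruct (Hcv (e / 3) ltac:(lra)) as [N HN]. exists N. intros i Hi.
    specialize (HN i Hi). unfold R_dist in HN. rewrite Rminus_0_r in HN.
    rewrite Rabs_pos_eq in HN by (apply Rlt_le; auto).
    destruct (rev_dir (Xs i) X (As i) A (eps i) (f i) (g i) (Hpos i) (Hf i) (Hg i) (Hc i))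
      as [Z [phi [psi [r [H1 [H2 [H3 H4]]]]]]].
    exists Z, phi, psi, r. destruct H4 as [H4 H5]. split; [exact H1|]. split; [exact H2|]. split; [lra|]. split; assumption.
Qed.
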